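(* Fix an architecture $(\mathbf d,\mathbf k,\mathbf s)$ of depth $N$, a loss $\ell:\mathbb{R}^{d_N}\times\mathbb{R}^{d_N}\to\mathbb{R}$, and data $X=(x_1,\dots,x_m)\in\mathbb{R}^{d_0\times m}$, $Y=(y_1,\dots,y_m)\in\mathbb{R}^{d_N\times m}$, and let $\mathcal{L}(\vec w)=\sum_{i=1}^m\ell(\Pi(\vec w)x_i,y_i)$. Assume that $XX^\top$ has full rank and that there exists a monotonically increasing function $h:\mathbb{R}\to\mathbb{R}_{\ge0}$ such that \[ \|WX-Y\|_1\le h\Big(\sum_{i=1}^m\ell(Wx_i,y_i)\Big)\qquad\text{for all } W\in\mathbb{R}^{d_N\times d_0}. \] Then there exists a non-decreasing function $g:\mathbb{R}\to\mathbb{R}_{\ge0}$ such that $\|\pi(\vec w)\|_1\le g(\mathcal{L}(\vec w))$ for all $\vec w\in\mathbb{R}^{\sum_{i=1}^N k_i}$.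
   Context: An architecture of depth $N$ is a triple $(\mathbf d,\mathbf k,\mathbf s)=((d_0,\dots,d_N),(k_1,\dots,k_N),(s_1,\dots,s_N))$ of positive integers with $d_i=\frac{d_{i-1}-k_i}{s_i}+1$. For a filter $w\in\mathbb{R}^{k}$ and stride $s$, the convolutional matrix $\Pi_{(d',d''),k,s}(w)\in\mathbb{R}^{d''\times d'}$ has entries $W_{j,(j-1)s+n}=w_n$ ($j\le d''$, $n\le k$) and zeros elsewhere. For $\vec w=(w^{(1)},\dots,w^{(N)})$, $w^{(i)}\in\mathbb{R}^{k_i}$, $\Pi(\vec w):=W_N\cdots W_1$ with $W_i=\Pi_{(d_{i-1},d_i),k_i,s_i}(w^{(i)})$; this is a convolutional matrix with stride $\prod_i s_i$ and filter width $k_v=k_1+\sum_{i=2}^N(k_i-1)\prod_{m=1}^{i-1}s_m$, and its filter is denoted $\pi(\vec w)\in\mathbb{R}^{k_v}$. For a matrix $A=(a_{ij})$, $\|A\|_1:=\sum_{i,j}|a_{ij}|$ (entrywise $\ell_1$-norm); for vectors $\|\cdot\|_1$ is the usual $\ell_1$-norm. *)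

(* Defs.v *)
From HB Require Import structures.
From mathcomp Require Import all_boot all_order all_algebra.
From mathcomp Require Import reals.
Unset Printing Implicit Defensive.
Import Order.TTheory GRing.Theory Num.Theory.
Local Open Scope ring_scope.

Definition architecture (N : nat) (d k s : nat -> nat) : Prop :=
  (0 < N)%N /\ (0 < d 0)%N /\
  forall i, (1 <= i <= N)%N ->
    [/\ (0 < d i)%N, (0 < k i)%N, (0 < s i)%N &
        (d i)%:R = ((d i.-1)%:R - (k i)%:R) / (s i)%:R + 1 :> rat].

(* Pi_{(d',d''),k,s}(w) : W_{j,(j-1)s+n} = w_n (1-indexed), 0 elsewhere.
   0-indexed: W j c = w n when c = j*s + n, n < k. *)
Definition convmx {R : pzRingType} (dp dpp : nat) {k : nat} (s : nat) (w : 'rV[R]_k)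
  : 'M[R]_(dpp, dp) :=
  \matrix_(j < dpp, c < dp) \sum_(n < k | (val c == val j * s + val n)%N) w 0 n.

Fixpoint convprod {R : pzRingType} (d k s : nat -> nat)
  (w : forall i : nat, 'rV[R]_(k i)) (i : nat) : 'M[R]_(d i, d 0) :=
  match i return 'M[R]_(d i, d 0) with
  | 0 => 1%:M
  | i'.+1 => convmx (d i') (d i'.+1) (s i'.+1) (w i'.+1) *m convprod d k s w i'
  end.

Definition conv_Pi {R : pzRingType} (N : nat) (d k s : nat -> nat)
  (w : forall i : nat, 'rV[R]_(k i)) : 'M[R]_(d N, d 0) := convprod d k s w N.

Definition kv (N : nat) (k s : nat -> nat) : nat :=
  (k 1 + \sum_(2 <= i < N.+1) (k i - 1) * \prod_(1 <= m < i) s m)%N.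

(* the filter of the convolutional matrix Pi(w): its first row, first k_v entries *)
Definition conv_filter {R : pzRingType} (N : nat) (d k s : nat -> nat)
  (w : forall i : nat, 'rV[R]_(k i)) : 'rV[R]_(kv N k s) :=
  \row_(t < kv N k s)
    \sum_(j < d N | val j == 0%N) \sum_(c < d 0 | val c == val t) conv_Pi N d k s w j c.

Definition l1mx {R : numDomainType} {m n : nat} (A : 'M[R]_(m, n)) : R :=
  \sum_(i < m) \sum_(j < n) `|A i j|.

(* Main.v *)
Require Import Defs.
From HB Require Import structures.
From mathcomp Require Import all_boot all_order all_algebra.
From mathcomp Require Import reals.
Import Order.TTheory GRing.Theory Num.Theory.
Local Open Scope ring_scope.

Lemma l1mx_ge0 {R : numDomainType} {m n} (A : 'M[R]_(m, n)) : 0 <= l1mx A.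
Proof. by apply: sumr_ge0 => i _; apply: sumr_ge0 => j _. Qed.

Lemma l1mx_add {R : numDomainType} {m n} (A B : 'M[R]_(m, n)) :
  l1mx (A + B) <= l1mx A + l1mx B.
Proof.
rewrite /l1mx -big_split /=; apply: ler_sum => i _.
rewrite -big_split /=; apply: ler_sum => j _; rewrite mxE; exact: ler_normD.
Qed.

Lemma l1mx_mul {R : numDomainType} {m n p} (A : 'M[R]_(m, n)) (B : 'M[R]_(n, p)) :
  l1mx (A *m B) <= l1mx A * l1mx B.
Proof.
rewrite /l1mx mulr_suml; apply: ler_sum => i _.
rewrite mulr_suml.
apply: (@le_trans _ _ (\sum_(j < p) \sum_(k < n) `|A i k| * `|B k j|)).
  apply: ler_sum => j _; rewrite mxE.
  apply: le_trans (ler_norm_sum _ _ _) _.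
  by apply: ler_sum => k _; rewrite normrM.
rewrite exchange_big /=; apply: ler_sum => k _.
rewrite -mulr_sumr; apply: ler_wpM2l => //.
rewrite (bigD1 k) //= lerDl; apply: sumr_ge0 => k' _.
by apply: sumr_ge0.
Qed.

Lemma filter_le (R : realType) N d k s (w : forall i : nat, 'rV[R]_(k i)) :
  l1mx (conv_filter N d k s w) <= l1mx (conv_Pi N d k s w).
Proof.
set P := conv_Pi N d k s w.
rewrite /l1mx big_ord1.
apply: (@le_trans _ _ (\sum_(t < kv N k s) \sum_(j < d N) \sum_(c < d 0 | val c == val t) `|P j c|)).
  apply: ler_sum => t _; rewrite mxE.
  apply: le_trans (ler_norm_sum _ _ _) _.
  apply: (@le_trans _ _ (\sum_(j < d N | val j == 0%N) \sum_(c < d 0 | val c == val t) `|P j c|)).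
    apply: ler_sum => j _; exact: ler_norm_sum.
  rewrite [X in _ <= X](bigID (fun j : 'I_(d N) => val j == 0%N)) /= lerDl.
  by apply: sumr_ge0 => j _; apply: sumr_ge0.
rewrite (exchange_big_dep predT) //=; apply: ler_sum => j _.
rewrite (exchange_big_dep predT) //=; apply: ler_sum => c _.
case: (ltnP (val c) (kv N k s)) => hc.
  rewrite (big_pred1 (Ordinal hc)) //= => t /=.
rewrite big_pred0 // => t /=; apply/negbTE; apply/eqP => e.
by move: (ltn_ord t); rewrite -e ltnNge hc.
Qed.

Theorem lemma3p6 (R : realType) (N : nat) (d k s : nat -> nat)
  (harch : architecture N d k s)
  (loss : 'cV[R]_(d N) -> 'cV[R]_(d N) -> R)
  (m : nat) (X : 'M[R]_(d 0%N, m)) (Y : 'M[R]_(d N, m))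
  (hX : \rank (X *m X^T) = d 0%N)
  (h : R -> R) (h_ge0 : forall x, 0 <= h x)
  (h_mono : forall x y, x <= y -> h x <= h y)
  (hbound : forall W : 'M[R]_(d N, d 0%N),
      l1mx (W *m X - Y) <= h (\sum_(i < m) loss (W *m col i X) (col i Y))) :
  exists g : R -> R,
    [/\ forall x, 0 <= g x,
        forall x y, x <= y -> g x <= g y &
        forall w : forall i : nat, 'rV[R]_(k i),
          l1mx (conv_filter N d k s w) <=
          g (\sum_(i < m) loss (conv_Pi N d k s w *m col i X) (col i Y))].
Proof.
have hU : X *m X^T \in unitmx by rewrite -row_free_unit /row_free hX.
set B := X^T *m invmx (X *m X^T).
have hXB : X *m B = 1%:M by rewrite /B mulmxA mulmxV.
exists (fun x => l1mx B * (h x + l1mx Y)); split.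
- by move=> x; apply: mulr_ge0; [exact: l1mx_ge0 | apply: addr_ge0; [exact: h_ge0 | exact: l1mx_ge0]].
- move=> x y hxy; apply: ler_wpM2l; first exact: l1mx_ge0.
  by rewrite lerD2r; apply: h_mono.
move=> w; apply: le_trans (filter_le _ _ _ _ _ _) _.
set P := conv_Pi N d k s w.
have -> : l1mx P = l1mx ((P *m X) *m B) by rewrite -mulmxA hXB mulmx1.
apply: le_trans (l1mx_mul (P *m X) B) _.
rewrite mulrC; apply: ler_wpM2l; first exact: l1mx_ge0.
have -> : l1mx (P *m X) = l1mx ((P *m X - Y) + Y) by rewrite subrK.
apply: le_trans (l1mx_add (P *m X - Y) Y) _.
by rewrite lerD2r; apply: hbound.
Qed.
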